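(* Let $A$ be a free finitely generated abelian group endowed with a structure of commutative ring, and let $\chi\colon A\to\mathbb{Z}$ be a linear map such that the symmetric pairing $\langle x,y\rangle:=\chi(x\cdot y)$ on $A$ is unimodular. Let $A=F^0A\supset F^1A\supset\ldots\supset F^dA\supset F^{d+1}A=0$ be a decreasing filtration with $F^iA\cdot F^jA\subset F^{i+j}A$ for all $i,j\geqslant0$, and assume $\mathrm{rk}(\mathrm{gr}^i_FA)=\mathrm{rk}(\mathrm{gr}^{d-i}_FA)$ for each $0\leqslant i\leqslant d$. Suppose the filtration splits, i.e. for each $i$, $0\leqslant i\leqslant d$, the quotient $A/F^iA$ is torsion-free. Then for each $i$, $0\leqslant i\leqslant d$, the induced pairing between free finitely generated abelian groups $\langle\cdot,\cdot\rangle_i\colon\mathrm{gr}^i_FA\otimes\mathrm{gr}^{d-i}_FA\to\mathbb{Z}$ is unimodular.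
   Context: $\mathrm{gr}^i_FA=F^iA/F^{i+1}A$. The pairing $\langle\cdot,\cdot\rangle_i$ is induced by $\langle\cdot,\cdot\rangle$, which is well defined on these quotients since $\langle F^iA,F^jA\rangle=0$ when $i+j\geqslant d+1$. *)

(* Defs.v *)
From HB Require Import structures.
From mathcomp Require Import all_boot all_order all_algebra.
Set Implicit Arguments. Unset Strict Implicit. Unset Printing Implicit Defensive.
Import Order.TTheory GRing.Theory Num.Theory.
Local Open Scope ring_scope.

Definition free_fg (A : zmodType) : Prop :=
  exists (n : nat) (e : 'I_n -> A),
    forall x : A, exists! c : {ffun 'I_n -> int}, x = \sum_(j < n) e j *~ c j.

Definition is_subgroup (A : zmodType) (U : A -> Prop) : Prop :=
  U 0 /\ forall x y, U x -> U y -> U (x - y).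

(* Given subgroups U' <= U and V' <= V of A and a Z-bilinear b on A
   (with b(U,V') = 0 = b(U',V)), [perfect_on b U U' V V'] says that the pairing
   induced by b on (U/U') x (V/V') -> Z is unimodular, i.e. both induced maps
   U/U' -> Hom(V/V',Z) and V/V' -> Hom(U/U',Z) are bijective.
   An element of Hom(V/V', Z) is an additive map on V vanishing on V'. *)
Definition perfect_on (A : zmodType) (b : A -> A -> int)
    (U U' V V' : A -> Prop) : Prop :=
  [/\
      (forall phi : A -> int,
         (forall y z, V y -> V z -> phi (y - z) = phi y - phi z) ->
         (forall y, V' y -> phi y = 0) ->
         exists x, U x /\ forall y, V y -> b x y = phi y),
      (forall x, U x -> (forall y, V y -> b x y = 0) -> U' x),
      (forall phi : A -> int,
         (forall x z, U x -> U z -> phi (x - z) = phi x - phi z) ->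
         (forall x, U' x -> phi x = 0) ->
         exists y, V y /\ forall x, U x -> b x y = phi x)
    &
      (forall y, V y -> (forall x, U x -> b x y = 0) -> V' y)].

Definition indep_mod (A : zmodType) (U U' : A -> Prop) (k : nat)
    (x : 'I_k -> A) : Prop :=
  (forall j, U (x j)) /\
  forall c : 'I_k -> int, U' (\sum_(j < k) x j *~ c j) -> forall j, c j = 0.

Definition quot_rank (A : zmodType) (U U' : A -> Prop) (r : nat) : Prop :=
  (exists x : 'I_r -> A, indep_mod U U' x) /\
  forall (k : nat) (x : 'I_k -> A), indep_mod U U' x -> (k <= r)%N.

(* Main.v *)
Require Import Defs.
From HB Require Import structures.
From mathcomp Require Import all_boot all_order all_algebra.
From Stdlib Require Import Classical.
From mathcomp Require Import zify.
Set Implicit Arguments. Unset Strict Implicit. Unset Printing Implicit Defensive.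
Import Order.TTheory GRing.Theory Num.Theory.
Local Open Scope ring_scope.



Section Sub.
Variable A : zmodType.
Variable U : A -> Prop.
Hypothesis HU : is_subgroup U.

Lemma sg0 : U 0. Proof. by case: HU. Qed.
Lemma sgB x y : U x -> U y -> U (x - y). Proof. by case: HU => _; apply. Qed.
Lemma sgN x : U x -> U (- x).
Proof. by move=> Ux; rewrite -sub0r; apply: sgB => //; exact: sg0. Qed.
Lemma sgD x y : U x -> U y -> U (x + y).
Proof. by move=> Ux Uy; rewrite -[y]opprK; apply: sgB => //; apply: sgN. Qed.
Lemma sgMn x k : U x -> U (x *+ k).
Proof. by move=> Ux; elim: k => [|k IH]; [rewrite mulr0n; exact: sg0 | rewrite mulrS; apply: sgD]. Qed.
Lemma sgMz x z : U x -> U (x *~ z).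
Proof. by move=> Ux; case: z => k; rewrite ?NegzE ?mulrNz; [apply: sgMn | apply/sgN/sgMn]. Qed.
Lemma sg_sum (I : Type) (r : seq I) (P : pred I) (F : I -> A) :
  (forall i, P i -> U (F i)) -> U (\sum_(i <- r | P i) F i).
Proof. move=> HF; apply: big_ind => //; [exact: sg0 | exact: sgD]. Qed.

Variable phi : A -> int.
Hypothesis Hphi : forall x y, U x -> U y -> phi (x - y) = phi x - phi y.

Lemma phi0 : phi 0 = 0.
Proof. by have := Hphi sg0 sg0; rewrite subrr => ->; rewrite subrr. Qed.
Lemma phiN x : U x -> phi (- x) = - phi x.
Proof. by move=> Ux; rewrite -sub0r Hphi //; [rewrite phi0 sub0r | exact: sg0]. Qed.
Lemma phiD x y : U x -> U y -> phi (x + y) = phi x + phi y.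
Proof.
move=> Ux Uy; have := Hphi Ux (sgN Uy); rewrite opprK => ->.
by rewrite phiN // opprK.
Qed.
Lemma phiMn x k : U x -> phi (x *+ k) = phi x *+ k.
Proof.
move=> Ux; elim: k => [|k IH]; first by rewrite !mulr0n phi0.
by rewrite !mulrS phiD // ?IH //; apply: sgMn.
Qed.
Lemma phiMz x z : U x -> phi (x *~ z) = phi x * z.
Proof.
move=> Ux; case: z => k; first by rewrite phiMn // -natz mulr_natr.
by rewrite NegzE mulrNz phiN; [rewrite phiMn // mulrN -natz mulr_natr | apply: sgMn].
Qed.
Lemma phi_sum (I : Type) (r : seq I) (P : pred I) (F : I -> A) :
  (forall i, P i -> U (F i)) -> phi (\sum_(i <- r | P i) F i) = \sum_(i <- r | P i) phi (F i).
Proof.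
move=> HF.
have : U (\sum_(i <- r | P i) F i) /\ phi (\sum_(i <- r | P i) F i) = \sum_(i <- r | P i) phi (F i).
  apply: (big_rec2 (fun s1 s2 => U s1 /\ phi s1 = s2)); first by rewrite phi0; split => //; exact: sg0.
  by move=> i y1 y2 Pi [Uy <-]; split; [apply: sgD; auto | rewrite phiD; auto].
by case.
Qed.
End Sub.

Definition saturated (A : zmodType) (U : A -> Prop) :=
  forall (N : nat) x, (0 < N)%N -> U (x *+ N) -> U x.

Lemma satz (A : zmodType) (U : A -> Prop) : is_subgroup U -> saturated U ->
  forall x z, z != 0 -> U (x *~ z) -> U x.
Proof.
move=> HU HS x [] k nz.
  by move=> H; apply: (HS k) => //; rewrite lt0n; apply: contra nz => /eqP ->.
rewrite NegzE mulrNz => H; apply: (HS k.+1) => //.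
by rewrite -[_ *+ _]opprK; apply: sgN.
Qed.



Definition ir := (intmul (1 : rat)).

Lemma clear_den q (w : 'rV[rat]_q) :
  exists N : nat, (0 < N)%N /\ exists c : 'rV[int]_q, map_mx ir c = w *+ N.
Proof.
pose D (j : 'I_q) := absz (denq (w 0 j)).
have Dpos (j : 'I_q) : (0 < D j)%N by rewrite absz_gt0 denq_neq0.
exists (\prod_j D j); split; first by apply: prodn_gt0.
exists (\row_j (numq (w 0 j) * (\prod_(k | k != j) D k)%:R)).
apply/rowP => j; rewrite !mxE mulmxnE [in RHS](bigD1 j) //= /ir intrM numqE.
rewrite -(mulr_natr (w 0 j)) natrM mulrA /D.
have -> : ((absz (denq (w 0 j)))%:R : rat) = (denq (w 0 j))%:~R.
  by rewrite -[in RHS](absz_denq (w 0 j)).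
by rewrite natz.
Qed.

Lemma mulmxMnl (R : pzRingType) m p q (X : 'M[R]_(m, p)) (Y : 'M[R]_(p, q)) N :
  (X *+ N) *m Y = (X *m Y) *+ N.
Proof. by elim: N => [|N IH]; rewrite ?mulr0n ?mul0mx // !mulrS mulmxDl IH. Qed.

Lemma ir0 : ir 0 = 0. Proof. by []. Qed.

Lemma ir_inj : injective ir. Proof. exact: intr_inj. Qed.

Section Basis.
Variable A : zmodType.
Variable n : nat.
Variable vec : 'rV[int]_n -> A.
Variable coord : A -> 'rV[int]_n.
Hypothesis vecB : {morph vec : u v / u - v}.
Hypothesis coordK : cancel coord vec.
Hypothesis vecK : cancel vec coord.

HB.instance Definition _ := GRing.isZmodMorphism.Build _ _ vec vecB.

Lemma coordB : {morph coord : x y / x - y}.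
Proof. by move=> x y; apply: (can_inj vecK); rewrite vecB !coordK. Qed.
HB.instance Definition _ := GRing.isZmodMorphism.Build _ _ coord coordB.

Definition iota x : 'rV[rat]_n := map_mx ir (coord x).
Lemma iotaB : {morph iota : x y / x - y}.
Proof. by move=> x y; rewrite /iota raddfB map_mxB. Qed.
HB.instance Definition _ := GRing.isZmodMorphism.Build _ _ iota iotaB.

Lemma iota_inj : injective iota.
Proof.
move=> x y H; apply: (can_inj coordK); apply/matrixP => i j; apply: ir_inj.
by have := congr1 (fun M : 'M[rat]_(1, n) => M i j) H; rewrite /iota !mxE.
Qed.

Lemma iota_vec c : iota (vec c) = map_mx ir c.
Proof. by rewrite /iota vecK. Qed.

Lemma vec_mul q (c : 'rV[int]_q) (M : 'M[int]_(q, n)) :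
  vec (c *m M) = \sum_i vec (row i M) *~ c 0 i.
Proof.
rewrite mulmx_sum_row raddf_sum; apply: eq_bigr => i _.
by rewrite -{1}[c 0 i]intz scaler_int raddfMz.
Qed.

Definition spanM (U : A -> Prop) q (M : 'M[int]_(q, n)) :=
  (forall i, U (vec (row i M))) /\ (forall x, U x -> (iota x <= map_mx ir M)%MS).

Lemma sat_span (U : A -> Prop) : is_subgroup U -> saturated U ->
  forall q (M : 'M[int]_(q, n)), (forall i, U (vec (row i M))) ->
  forall x, (iota x <= map_mx ir M)%MS -> U x.
Proof.
move=> HU HS q M HM x /submxP [w Ew].
have [N [N0 [c Ec]]] := clear_den w.
apply: (HS N) => //.
have -> : x *+ N = vec (c *m M).
  apply: iota_inj; rewrite iota_vec map_mxM Ec raddfMn /= Ew.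
  by rewrite mulmxMnl.
by rewrite vec_mul; apply: sg_sum => // i _; apply: sgMz.
Qed.

Lemma span_exists (U : A -> Prop) : exists q (M : 'M[int]_(q, n)), spanM U M.
Proof.
suff H : forall t q (M : 'M[int]_(q, n)), (forall i, U (vec (row i M))) ->
    (n - \rank (map_mx ir M) <= t)%N -> exists q (M : 'M[int]_(q, n)), spanM U M.
  by apply: (H n 0%N 0) => [[]//|]; rewrite leq_subr.
elim=> [|t IH] q M HM Ht.
  exists q, M; split => // x Ux; apply: submx_full.
  by rewrite /row_full eqn_leq rank_leq_col -subn_eq0 -leqn0.
case: (classic (forall x, U x -> (iota x <= map_mx ir M)%MS)) => [Hall | Hn].
  by exists q, M.
have [x [Ux Nx]] : exists x, U x /\ ~~ (iota x <= map_mx ir M)%MS.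
  apply: NNPP => H; apply: Hn => x Ux; apply/negPn/negP => Hx; apply: H; by exists x.
apply: (IH _ (col_mx M (coord x))).
  move=> i; rewrite -[i]splitK; case: (split i) => k /=; first by rewrite rowKu.
  rewrite rowKd; have -> : row k (coord x) = coord x by apply/rowP => j; rewrite mxE [k]ord1.
  by rewrite coordK.
have sub1 : (map_mx ir M <= col_mx (map_mx ir M) (iota x))%MS.
  have E : map_mx ir M = row_mx 1%:M 0 *m col_mx (map_mx ir M) (iota x).
    by rewrite mul_row_col mul1mx mul0mx addr0.
  rewrite {1}E; exact: submxMl.
have lt : (\rank (map_mx ir M) < \rank (map_mx ir (col_mx M (coord x))))%N.
  rewrite map_col_mx (ltn_leqif (mxrank_leqif_sup sub1)) col_mx_sub.
  by rewrite (negPf Nx) andbF.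
have := rank_leq_col (map_mx ir (col_mx M (coord x))).
move: lt Ht; set a := \rank _; set b := \rank _ => lt Ht le.
lia.
Qed.

Lemma smith_struct (U : A -> Prop) : is_subgroup U -> saturated U ->
  forall q (M : 'M[int]_(q, n)), spanM U M ->
  exists (R : 'M[int]_n) (P : pred 'I_n), [/\ R \in unitmx,
    (forall j, P j -> U (vec (row j R))) &
    (forall x, U x -> forall j, ~~ P j -> (coord x *m invmx R) 0 j = 0)].
Proof.
move=> HU HS q M [HM HMs].
case: (int_Smith_normal_form M) => L uL [R uR [d _ EM]].
set D := \matrix_(i, j) _ in EM.
exists R, (fun j : 'I_n => (j < q)%N && (d`_j != 0)); split => //.
- move=> j /andP [jq dj].
  pose i := Ordinal jq.
  apply: (satz HU HS dj).
  have E : row i (invmx L) *m M = (row j R) *~ d`_j.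
    rewrite -row_mul EM -!mulmxA mulKmx // row_mul mulmx_sum_row (bigD1 j) //=.
    rewrite big1 ?addr0.
      by rewrite !mxE eqxx mulr1n -{1}[d`_j]intz scaler_int.
    move=> k kj; rewrite !mxE.
    have -> : (i == k :> nat) = false by apply/negbTE; rewrite eq_sym.
    by rewrite mulr0n scale0r.
  have -> : vec (row j R) *~ d`_j = vec (row i (invmx L) *m M).
    by rewrite E raddfMz.
  rewrite vec_mul; apply: sg_sum => // k _; apply: sgMz => //; exact: HM.
- move=> x Ux j Pj.
  have /submxP [w Ew] := HMs x Ux.
  apply: ir_inj; rewrite ir0.
  have RR : map_mx ir R *m map_mx ir (invmx R) = 1%:M by rewrite -map_mxM mulmxV // map_mx1.
  have : map_mx ir (coord x *m invmx R) = (w *m map_mx ir L) *m map_mx ir D.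
    by rewrite map_mxM -/(iota x) Ew EM !map_mxM -!mulmxA RR mulmx1.
  move/(congr1 (fun X : 'rV_n => X 0 j)); rewrite !mxE => ->.
  apply: big1 => k _; rewrite !mxE.
  case: eqP => [kj|]; last by rewrite mulr0n ir0 mulr0.
  move: Pj; rewrite -kj ltn_ord /= negbK => /eqP ->.
  by rewrite mul0rn ir0 mulr0.
Qed.

Lemma extend (U : A -> Prop) : is_subgroup U -> saturated U ->
  forall q (M : 'M[int]_(q, n)), spanM U M ->
  forall phi : A -> int, (forall x y, U x -> U y -> phi (x - y) = phi x - phi y) ->
  exists psi : A -> int, (forall x y, psi (x - y) = psi x - psi y) /\
     (forall x, U x -> psi x = phi x).
Proof.
move=> HU HS q M HM phi Hphi.
have [R [P [uR HP1 HP2]]] := smith_struct HU HS HM.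
pose c x j := (coord x *m invmx R) 0 j.
exists (fun x => \sum_j (if P j then c x j * phi (vec (row j R)) else 0)); split.
  move=> x y; rewrite -sumrB; apply: eq_bigr => j _; case: (P j); last by rewrite subr0.
  by rewrite /c raddfB mulmxBl !mxE mulrDl mulNr.
move=> x Ux.
have Ex : x = \sum_(j | P j) vec (row j R) *~ c x j.
  rewrite -{1}(coordK x) -{1}(mulmxKV uR (coord x)) vec_mul [LHS](bigID P) /=.
  rewrite [X in _ + X]big1 ?addr0 //.
  by move=> j Pj; rewrite HP2 // mulr0z.
rewrite {2}Ex (phi_sum HU Hphi); last by move=> j Pj; apply: sgMz => //; apply: HP1.
rewrite [RHS]big_mkcond /=; apply: eq_bigr => j _; case: ifP => Pj //.
rewrite (phiMz HU Hphi); last exact: HP1.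
by rewrite /c mulrC.
Qed.

Lemma tf (x : A) N : (0 < N)%N -> x *+ N = 0 -> x = 0.
Proof.
move=> N0 H; apply: iota_inj; rewrite raddf0.
have : iota x *+ N = 0 by rewrite -raddfMn /= H raddf0.
move/eqP; rewrite -scaler_nat scaler_eq0 pnatr_eq0 (negbTE (lt0n_neq0 N0)) /=.
by move/eqP.
Qed.

Definition rk (U : A -> Prop) m :=
  exists q (M : 'M[int]_(q, n)), spanM U M /\ \rank (map_mx ir M) = m.

Lemma rk_exists U : exists m, rk U m.
Proof. by have [q [M HM]] := span_exists U; exists (\rank (map_mx ir M)), q, M. Qed.

Lemma rows_sub (U : A -> Prop) q (M : 'M[int]_(q, n)) q' (M' : 'M[int]_(q', n)) :
  (forall i, U (vec (row i M))) -> (forall x, U x -> (iota x <= map_mx ir M')%MS) ->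
  (map_mx ir M <= map_mx ir M')%MS.
Proof. by move=> HM HM'; apply/row_subP => i; rewrite -map_row -iota_vec; apply: HM'. Qed.

Lemma rk_le (U V : A -> Prop) a b : (forall x, U x -> V x) -> rk U a -> rk V b -> (a <= b)%N.
Proof.
move=> sUV [q [M [[HM _] <-]]] [q' [M' [[_ HM'] <-]]].
by apply: mxrankS; apply: (rows_sub (U := U)) => // x /sUV; apply: HM'.
Qed.

Lemma rk_sub_eq (V W : A -> Prop) a b : is_subgroup V -> saturated V ->
  (forall x, V x -> W x) -> rk V a -> rk W b -> (b <= a)%N -> forall x, W x -> V x.
Proof.
move=> HV HS sVW [q [M [[HM HMs] ra]]] [q' [M' [[HM' HM's] rb]]] le x Wx.
have sMM : (map_mx ir M <= map_mx ir M')%MS.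
  by apply: (rows_sub (U := V)) => // y /sVW; apply: HM's.
have := (mxrank_leqif_sup sMM).2; rewrite ra rb.
have -> : (a == b) = true by rewrite eqn_leq le andbT; rewrite -ra -rb; exact: mxrankS.
move=> /esym sM'M.
apply: (sat_span HV HS HM); exact: submx_trans (HM's x Wx) sM'M.
Qed.

Lemma qrank (U U' : A -> Prop) : is_subgroup U' -> saturated U' ->
  (forall x, U' x -> U x) -> forall m m' r, rk U m -> rk U' m' ->
  quot_rank U U' r -> (r + m')%N = m.
Proof.
move=> HU' HS' sub m m' r [q [M [[HM HMs] <-]]] [q' [M' [[HM' HM's] <-]]].
move=> [[x [Ux Ix]] Hmax].
pose Xi : 'M[int]_(r, n) := \matrix_(j, k) coord (x j) 0 k.
have rowX j : row j Xi = coord (x j) by apply/rowP => k; rewrite !mxE.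
pose X := map_mx ir Xi.
have rowXq j : row j X = iota (x j) by rewrite /X -map_row rowX.
have vecX (c : 'rV[int]_r) : vec (c *m Xi) = \sum_j x j *~ c 0 j.
  by rewrite vec_mul; apply: eq_bigr => j _; rewrite rowX coordK.
have key : forall w : 'rV[rat]_r, (w *m X <= map_mx ir M')%MS -> w = 0.
  move=> w Hw; have [N [N0 [c Ec]]] := clear_den w.
  have Uc : U' (\sum_j x j *~ c 0 j).
    rewrite -vecX; apply: (sat_span HU' HS' HM').
    by rewrite iota_vec map_mxM Ec mulmxMnl -scaler_nat; apply: scalemx_sub.
  have c0 := Ix (fun j => c 0 j) Uc.
  have : w *+ N = 0 by rewrite -Ec; apply/rowP => j; rewrite !mxE c0.
  move/eqP; rewrite -scaler_nat scaler_eq0 pnatr_eq0.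
  by rewrite (negbTE (lt0n_neq0 N0)) /= => /eqP.
have rX : \rank X = r.
  apply/eqP; change (row_free X); rewrite -kermx_eq0; apply/rowV0P => v /sub_kermxP vX.
  by apply: key; rewrite vX sub0mx.
have disj : (X :&: map_mx ir M')%MS = 0.
  apply/eqP/rowV0P => v; rewrite sub_capmx => /andP [/submxP [w ->] Hw].
  by rewrite (key w Hw) mul0mx.
have rS := mxrank_disjoint_sum disj.
have sXM : (X + map_mx ir M' <= map_mx ir M)%MS.
  rewrite addsmx_sub; apply/andP; split.
    by apply/row_subP => j; rewrite rowXq; apply: HMs; exact: Ux j.
  by apply: (rows_sub (U := U')) => // y /sub; apply: HMs.
have sMX : (map_mx ir M <= X + map_mx ir M')%MS.
  apply/row_subP => i; rewrite -map_row -iota_vec; set u := vec (row i M).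
  have Uu : U u := HM i.
  apply/idPn => Nu.
  pose x' (j : 'I_r.+1) := if unlift ord_max j is Some k then x k else u.
  have : (r.+1 <= r)%N; last by rewrite ltnn.
  apply: (Hmax _ x'); split.
    by move=> j; rewrite /x'; case: unliftP => [k|] _; [exact: Ux | exact: Uu].
  move=> c Hc.
  have E : \sum_(j < r.+1) x' j *~ c j =
      \sum_(k < r) x k *~ c (lift ord_max k) + u *~ c ord_max.
    rewrite big_ord_recr /= /x' unlift_none; congr (_ + _); apply: eq_bigr => k _.
    have -> : widen_ord (leqnSn r) k = lift ord_max k by apply: val_inj; rewrite [RHS]lift_max.
    by rewrite liftK.
  pose c' := \row_k c (lift ord_max k).
  have E2 : \sum_(k < r) x k *~ c (lift ord_max k) = vec (c' *m Xi).
    by rewrite vecX; apply: eq_bigr => k _; rewrite mxE.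
  have cmax : c ord_max = 0.
    apply/eqP/negPn/negP => nz; apply: (negP Nu).
    have Hs := HM's _ Hc.
    rewrite E E2 raddfD /= raddfMz /= iota_vec map_mxM in Hs.
    have H2 : (iota u *~ c ord_max <= X + map_mx ir M')%MS.
      have -> : iota u *~ c ord_max =
          (map_mx ir c' *m X + iota u *~ c ord_max) - map_mx ir c' *m X by rewrite addrC addKr.
      apply: addmx_sub.
        by apply: (submx_trans Hs); apply: addsmxSr.
      rewrite -scaleN1r; apply: scalemx_sub; apply: (submx_trans (submxMl _ _)); apply: addsmxSl.
    have -> : iota u = (ir (c ord_max))^-1 *: (iota u *~ c ord_max).
      rewrite -scaler_int scalerA mulVf ?scale1r //.
      by rewrite intr_eq0.
    exact: scalemx_sub.
  move=> j; case: (unliftP ord_max j) => [k|] ->; last exact: cmax.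
  rewrite E cmax mulr0z addr0 in Hc.
  exact: Ix (fun k => c (lift ord_max k)) Hc k.
have h1 := mxrankS sXM; have h2 := mxrankS sMX; rewrite rS rX in h1 h2.
by apply/eqP; rewrite eqn_leq h1 h2.
Qed.
End Basis.



Section Ring.
Variable A : comPzRingType.
Variable n : nat.
Variable vec : 'rV[int]_n -> A.
Variable coord : A -> 'rV[int]_n.
Hypothesis vecB : {morph vec : u v / u - v}.
Hypothesis coordK : cancel coord vec.
Hypothesis vecK : cancel vec coord.
Variable chi : A -> int.
Hypothesis chiD : forall x y, chi (x + y) = chi x + chi y.
Hypothesis inj : forall y, (forall x, chi (x * y) = 0) -> y = 0.
Hypothesis surj : forall phi : A -> int, (forall x z, phi (x - z) = phi x - phi z) ->
  exists y, forall x, chi (x * y) = phi x.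

HB.instance Definition _ := GRing.isZmodMorphism.Build _ _ vec vecB.

Lemma coordB' : {morph coord : x y / x - y}.
Proof. by move=> x y; apply: (can_inj vecK); rewrite vecB !coordK. Qed.
HB.instance Definition _ := GRing.isZmodMorphism.Build _ _ coord coordB'.

Lemma chiB : {morph chi : x y / x - y}.
Proof. by move=> x y; apply/eqP; rewrite eq_sym subr_eq -chiD subrK. Qed.
HB.instance Definition _ := GRing.isZmodMorphism.Build _ _ chi chiB.

Definition perp (U : A -> Prop) := fun y => forall u, U u -> chi (u * y) = 0.

Lemma perp_rank (U : A -> Prop) : is_subgroup U -> saturated U ->
  forall m p, rk vec coord U m -> rk vec coord (perp U) p -> (p + m <= n)%N.
Proof.
move=> HU HS m p [q [M [HM <-]]] [q' [W [[HW HWs] <-]]].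
have [R [P [uR HP1 HP2]]] := smith_struct vecB HU HS HM.
pose psi j x := (coord x *m invmx R) 0 j.
have [y Hy] : exists y : 'I_n -> A, forall j x, chi (x * y j) = psi j x.
  have H : forall j : 'I_n, exists yj : A, forall x, chi (x * yj) = psi j x.
    move=> j; apply: surj => x z.
    by rewrite /psi (raddfB coord) mulmxBl !mxE.
  have [f Hf] := fin_all_exists H; by exists f.
pose r j := vec (row j R).
have xdec x : x = \sum_j r j *~ psi j x.
  by rewrite -{1}(coordK x) -{1}(mulmxKV uR (coord x)) (vec_mul vecB).
have ydec y0 : y0 = \sum_j y j *~ chi (r j * y0).
  apply/eqP; rewrite -subr_eq0; apply/eqP; apply: inj => x.
  rewrite mulrBr raddfB /= mulr_sumr raddf_sum /=.
  rewrite {1}(xdec x) mulr_suml raddf_sum /=.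
  apply/eqP; rewrite subr_eq0; apply/eqP; apply: eq_bigr => j _.
  by rewrite mulrzAl mulrzAr !raddfMz /= Hy !mulrzz mulrC.
pose Yi : 'M[int]_n := \matrix_(j, k) coord (y j) 0 k.
have rowY j : row j Yi = coord (y j) by apply/rowP => k; rewrite !mxE.
pose Dp : 'M[rat]_n := diag_mx (\row_j ((P j)%:R : rat)).
pose Dn : 'M[rat]_n := diag_mx (\row_j ((~~ P j)%:R : rat)).
have sM : (map_mx ir M <= Dp *m map_mx ir R)%MS.
  apply/row_subP => i; rewrite -map_row -(iota_vec vecK).
  set u := vec (row i M); have Uu : U u by case: HM => H _; exact: H i.
  pose a := map_mx ir (coord u *m invmx R).
  have -> : iota coord u = a *m Dp *m map_mx ir R.
    have -> : a *m Dp = a.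
      apply/rowP => j; rewrite mul_mx_diag mxE [X in _ * X]mxE.
      case Pj: (P j); first by rewrite mulr1.
      by rewrite mulr0 /a mxE HP2 ?Pj.
    by rewrite /a -map_mxM mulmxKV.
  by rewrite -mulmxA submxMl.
have sW : (map_mx ir W <= Dn *m map_mx ir Yi)%MS.
  apply/row_subP => i; rewrite -map_row -(iota_vec vecK).
  set w0 := vec (row i W); have Pw : perp U w0 := HW i.
  pose c := \row_j chi (r j * w0).
  have Ew : w0 = vec (c *m Yi).
    rewrite (vec_mul vecB) {1}(ydec w0); apply: eq_bigr => j _.
    by rewrite rowY coordK mxE.
  have -> : iota coord w0 = map_mx ir c *m Dn *m map_mx ir Yi.
    have -> : map_mx ir c *m Dn = map_mx ir c.
      apply/rowP => j; rewrite mul_mx_diag mxE [X in _ * X]mxE.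
      case Pj: (P j); last by rewrite mulr1.
      by rewrite mulr0 !mxE Pw ?ir0 //; apply: HP1.
    by rewrite {1}Ew (iota_vec vecK) map_mxM.
  by rewrite -mulmxA submxMl.
have D0 : Dp *m Dn = 0.
  rewrite mulmx_diag; apply/matrixP => i j; rewrite !mxE.
  by case: (P i); rewrite ?mulr0 ?mul0r ?mul0rn.
have := mulmx0_rank_max D0.
have := leq_trans (mxrankS sM) (mxrankM_maxl _ _).
have := leq_trans (mxrankS sW) (mxrankM_maxl _ _).
lia.
Qed.

Variable d : nat.
Variable F : nat -> A -> Prop.
Hypothesis HF : forall i, is_subgroup (F i).
Hypothesis F0 : forall x, F 0%N x.
Hypothesis Fdec : forall i x, F i.+1 x -> F i x.
Hypothesis Fd1 : forall x, F d.+1 x -> x = 0.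
Hypothesis FM : forall (i j : nat) x y, F i x -> F j y -> F (i + j)%N (x * y).
Hypothesis Hrk : forall i, (i <= d)%N -> exists r : nat,
      quot_rank (F i) (F i.+1) r /\ quot_rank (F (d - i)%N) (F (d - i).+1) r.
Hypothesis Hsat : forall i, (i <= d)%N -> forall (n : nat) (x : A),
      (0 < n)%N -> F i (x *+ n) -> F i x.

Lemma satF k : (k <= d.+1)%N -> saturated (F k).
Proof.
rewrite leq_eqVlt => /orP [/eqP -> | lt]; last by move=> N x N0; apply: Hsat.
move=> N x N0 /Fd1 H0.
by rewrite (tf vecB coordK vecK N0 H0); exact: sg0.
Qed.

Lemma rkF0 a : rk vec coord (F 0) a -> a = n.
Proof.
move=> [q [M [[HM HMs] <-]]]; apply/eqP; rewrite eqn_leq rank_leq_col /=.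
apply: (@leq_trans (\rank (1%:M : 'M[rat]_n))); first by rewrite mxrank1.
apply: mxrankS; apply/row_subP => j.
have -> : row j (1%:M : 'M[rat]_n) = iota coord (vec (row j 1%:M)).
  rewrite (iota_vec vecK); apply/rowP => k; rewrite !mxE.
  by case: (j == k).
exact: HMs.
Qed.

Lemma rkFd1 b : rk vec coord (F d.+1) b -> b = 0%N.
Proof.
move=> [q [M [[HM HMs] <-]]]; apply/eqP; rewrite -leqn0.
rewrite -(@mxrank0 rat n n); apply: mxrankS; apply/row_subP => j.
by rewrite -map_row -(iota_vec vecK) (Fd1 (HM j)) /iota raddf0 map_mx0 sub0mx.
Qed.

Lemma T k : (k <= d.+1)%N -> forall a b, rk vec coord (F k) a ->
  rk vec coord (F (d.+1 - k)) b -> (a + b)%N = n.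
Proof.
elim: k => [|k IH] lek a b Ha Hb.
  by rewrite subn0 in Hb; rewrite (rkF0 Ha) (rkFd1 Hb) addn0.
have kd : (k <= d)%N by [].
have [a0 Ha0] := rk_exists coordK (F k).
have [b0 Hb0] := rk_exists coordK (F (d.+1 - k)).
have := IH (ltnW lek) _ _ Ha0 Hb0.
have [r [q1 q2]] := Hrk kd.
have E1 := qrank vecB coordK vecK (HF k.+1) (satF lek) (@Fdec k) Ha0 Ha q1.
rewrite subSS in Hb; rewrite subSn // in Hb0.
have E2 := qrank vecB coordK vecK (HF (d - k).+1) (satF _) (@Fdec (d - k)) Hb Hb0 q2.
have : ((d - k).+1 <= d.+1)%N by rewrite ltnS leq_subr.
move=> /E2 {}E2.
lia.
Qed.


Lemma perpF k : (k <= d.+1)%N -> forall y, perp (F k) y -> F (d.+1 - k) y.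
Proof.
move=> lek.
have [a Ha] := rk_exists coordK (F (d.+1 - k)).
have [b Hb] := rk_exists coordK (perp (F k)).
have [c Hc] := rk_exists coordK (F k).
have E := T lek Hc Ha.
have le := perp_rank (HF k) (satF lek) Hc Hb.
apply: (rk_sub_eq vecB coordK vecK (HF _) (satF (leq_subr _ _)) _ Ha Hb).
  move=> v Fv u Fu; have := FM Fu Fv; rewrite subnKC // => /Fd1 ->.
  by rewrite raddf0.
lia.
Qed.

Lemma extF k : (k <= d)%N -> forall phi : A -> int,
  (forall x y, F k x -> F k y -> phi (x - y) = phi x - phi y) ->
  exists psi : A -> int, (forall x y, psi (x - y) = psi x - psi y) /\
     (forall x, F k x -> psi x = phi x).
Proof.
move=> kd phi Hphi; have [q [M HM]] := span_exists coordK (F k).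
exact: (extend vecB coordK vecK (HF k) (satF (leqW kd)) HM Hphi).
Qed.

Lemma mainF i : (i <= d)%N -> perfect_on (fun x y => chi (x * y))
      (F i) (F i.+1) (F (d - i)%N) (F (d - i).+1).
Proof.
move=> id; split.
- move=> phi Hphi H0.
  have [psi [Hpsi Epsi]] := extF (leq_subr i d) Hphi.
  have [x Hx] := surj Hpsi.
  exists x; split.
    have : F (d.+1 - (d - i).+1) x.
      apply: perpF; first by rewrite ltnS leq_subr.
      move=> u Fu; rewrite Hx Epsi ?H0 //; exact: Fdec.
    by rewrite subSS subKn.
  by move=> y Fy; rewrite mulrC Hx Epsi.
- move=> x Fx H.
  have : F (d.+1 - (d - i)) x.
    by apply: perpF; [rewrite leqW // leq_subr | move=> u Fu; rewrite mulrC H].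
  by rewrite subSn ?leq_subr // subKn.
- move=> phi Hphi H0.
  have [psi [Hpsi Epsi]] := extF id Hphi.
  have [y Hy] := surj Hpsi.
  exists y; split.
    have : F (d.+1 - i.+1) y.
      apply: perpF => // u Fu; rewrite Hy Epsi ?H0 //; exact: Fdec.
    by rewrite subSS.
  by move=> x Fx; rewrite Hy Epsi.
- move=> y Fy H.
  have : F (d.+1 - i) y by apply: perpF; [exact: leqW | exact: H].
  by rewrite subSn.
Qed.

End Ring.



Theorem lemma4p1 (A : comPzRingType) (chi : A -> int) (d : nat)
    (F : nat -> A -> Prop) :
  free_fg A ->
  (forall x y, chi (x + y) = chi x + chi y) ->
  perfect_on (fun x y => chi (x * y))
    (fun _ => True) (fun x => x = 0) (fun _ => True) (fun x => x = 0) ->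
  (forall i, is_subgroup (F i)) ->
  (forall x, F 0%N x) ->
  (forall i x, F i.+1 x -> F i x) ->
  (forall x, F d.+1 x -> x = 0) ->
  (forall (i j : nat) x y, F i x -> F j y -> F (i + j)%N (x * y)) ->
  (forall i, (i <= d)%N -> exists r : nat,
      quot_rank (F i) (F i.+1) r /\ quot_rank (F (d - i)%N) (F (d - i).+1) r) ->
  (forall i, (i <= d)%N -> forall (n : nat) (x : A),
      (0 < n)%N -> F i (x *+ n) -> F i x) ->
  forall i, (i <= d)%N ->
    perfect_on (fun x y => chi (x * y))
      (F i) (F i.+1) (F (d - i)%N) (F (d - i).+1).
Proof.
move=> [n [e He]] chiD [s1 i1 s2 i2] HF F0 Fdec Fd1 FM Hrk Hsat i id.
pose vec (c : 'rV[int]_n) : A := \sum_j e j *~ c 0 j.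
have exE : forall x, exists c : {ffun 'I_n -> int}, x == \sum_j e j *~ c j.
  by move=> x; have [c [Hc _]] := He x; exists c; apply/eqP.
pose coord x : 'rV[int]_n := \row_j (xchoose (exE x)) j.
have vecB : {morph vec : u v / u - v}.
  by move=> u v; rewrite /vec -sumrB; apply: eq_bigr => j _; rewrite !mxE mulrzBr.
have coordK : cancel coord vec.
  move=> x; transitivity (\sum_j e j *~ xchoose (exE x) j).
    by apply: eq_bigr => j _; rewrite mxE.
  by apply/esym/eqP; exact: xchooseP (exE x).
have vecK : cancel vec coord.
  move=> c; have [c0 [_ Hu]] := He (vec c).
  have E1 : xchoose (exE (vec c)) = c0.
    by apply: esym; apply: Hu; apply/eqP; exact: xchooseP (exE (vec c)).
  have E2 : [ffun j => c 0 j] = c0.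
    by apply: esym; apply: Hu; rewrite /vec; apply: eq_bigr => j _; rewrite ffunE.
  apply/rowP => j; rewrite mxE E1 -E2 ffunE //.
have inj : forall y, (forall x, chi (x * y) = 0) -> y = 0.
  by move=> y H; apply: i2 => // x _; apply: H.
have surj : forall phi : A -> int, (forall x z, phi (x - z) = phi x - phi z) ->
    exists y, forall x, chi (x * y) = phi x.
  move=> phi Hphi.
  have [|y [_ Hy]] := s2 phi (fun x z _ _ => Hphi x z).
    by move=> x ->; have := Hphi 0 0; rewrite !subrr.
  by exists y => x; apply: Hy.
exact: (mainF vecB coordK vecK chiD inj surj HF F0 Fdec Fd1 FM Hrk Hsat id).
Qed.
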